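(* Let $T$ be a nontrivial tree of order $n(T)$ with $l(T)$ leaves and $s(T)$ support vertices. Then $\gamma^{d}_2(T)\leq \frac{n(T)+3s(T)-l(T)}{4}$.
   Context: A leaf is a vertex of degree $1$; a support vertex is a vertex adjacent to a leaf. For a tree $T$, $n(T)$, $l(T)$, $s(T)$ denote its order, number of leaves and number of support vertices. A set $D\subseteq V(G)$ is a disjunctive dominating set of $G$ if every vertex $v\notin D$ either has a neighbor in $D$ or has at least two vertices of $D$ at distance exactly $2$ from it. $\gamma^{d}_2(G)$ is the minimum size of such a set. *)

(* Defs.v *)
From mathcomp Require Import all_boot.
Set Implicit Arguments. Unset Strict Implicit. Unset Printing Implicit Defensive.

Section Graph.
Variables (T : finType) (e : rel T).

Definition simple_graph := symmetric e /\ irreflexive e.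

(* number of edges: ordered adjacent pairs counted twice *)
Definition n_edges := #|[set p : T * T | e p.1 p.2]| %/ 2.

Definition is_tree := simple_graph /\ (forall x y, connect e x y) /\ n_edges = #|T| - 1.

Definition deg (v : T) := #|[set u | e v u]|.
Definition leaves := [set v | deg v == 1].
Definition supports := [set v | [exists u, e v u && (u \in leaves)]].

Definition dist2 (x y : T) := [&& x != y, ~~ e x y & [exists z, e x z && e z y]].

Definition disj_dom (D : {set T}) :=
  [forall v, (v \notin D) ==>
     ([exists u in D, e v u] || (1 < #|[set u in D | dist2 v u]|))].

Definition gamma_d2 := \big[minn/#|T|]_(D : {set T} | disj_dom D) #|D|.
End Graph.

(* Main.v *)
Require Import Defs.
From mathcomp Require Import all_boot zify.
Set Implicit Arguments. Unset Strict Implicit. Unset Printing Implicit Defensive.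


Section Depth.
Variables (T : finType) (e : rel T) (r : T).
Hypotheses (esym : symmetric e) (hconn : forall x, connect e r x).

Fixpoint ball (k : nat) : {set T} :=
  if k is k'.+1 then ball k' :|: [set y | [exists x in ball k', e x y]] else [set r].

Lemma ball_mono k m : k <= m -> ball k \subset ball m.
Proof.
move=> /subnK <-; elim: (m - k) => [|j IH]; first by rewrite add0n.
apply: subset_trans IH _; rewrite addSn /=; exact: subsetUl.
Qed.

Lemma ball_step k x y : x \in ball k -> e x y -> y \in ball k.+1.
Proof. by move=> hx hxy /=; rewrite in_setU in_set; apply/orP; right; apply/existsP; exists x; rewrite hx. Qed.

Lemma ball_path p a k : a \in ball k -> path e a p -> last a p \in ball (k + size p).
Proof.
elim: p a k => [|b p IH] a k /=; first by rewrite addn0.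
move=> ha /andP[hab hp]; rewrite addnS -addSn; apply: IH hp.
exact: ball_step hab.
Qed.

Lemma ex_ball x : exists k, x \in ball k.
Proof.
have /connectP [p hp ->] := hconn x.
exists (0 + size p); apply: ball_path hp; exact: set11.
Qed.

Definition depth x := ex_minn (ex_ball x).

Lemma depth_ball x : x \in ball (depth x).
Proof. by rewrite /depth; case: ex_minnP. Qed.

Lemma depth_min x k : x \in ball k -> depth x <= k.
Proof. by rewrite /depth; case: ex_minnP => m _ H /H. Qed.

Lemma ballE x k : (x \in ball k) = (depth x <= k).
Proof.
apply/idP/idP; first exact: depth_min.
by move=> h; apply: (subsetP (ball_mono h)); exact: depth_ball.
Qed.

Lemma depth_r : depth r = 0.
Proof. by apply/eqP; rewrite -leqn0 -ballE /= set11. Qed.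

Lemma depth0 x : depth x = 0 -> x = r.
Proof. by move=> h; have := depth_ball x; rewrite h /= in_set1 => /eqP. Qed.

Lemma depth_edge x y : e x y -> depth y <= (depth x).+1.
Proof. by move=> h; rewrite -ballE; apply: ball_step h; exact: depth_ball. Qed.

Lemma depth_pred x k : depth x = k.+1 -> exists p, e p x /\ depth p = k.
Proof.
move=> h; have := depth_ball x; rewrite h /= in_setU in_set ballE h ltnn /=.
case/existsP => p /andP[hp hpx]; exists p; split => //.
rewrite ballE in hp; have := depth_edge hpx; rewrite h; lia.
Qed.

Definition par v := odflt r [pick p | e p v && (depth p == (depth v).-1)].

Lemma par_spec v : v != r -> [/\ e (par v) v, depth (par v) = (depth v).-1 & 0 < depth v].
Proof.
move=> hv; have hd : 0 < depth v.
  by rewrite lt0n; apply/eqP => /depth0 h; rewrite h eqxx in hv.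
have [p [hp1 hp2]] : exists p, e p v /\ depth p = (depth v).-1.
  by apply: depth_pred; rewrite prednK.
rewrite /par; case: pickP => [q /andP[h1 /eqP h2]|/(_ p)] //=.
by rewrite hp1 hp2 eqxx.
Qed.

End Depth.


Section TreeS.
Variables (T : finType) (e : rel T) (r : T).
Hypotheses (esym : symmetric e) (eirr : irreflexive e) (hconn : forall x, connect e r x)
  (hedges : n_edges e = #|T| - 1).

Notation d := (depth hconn).
Notation par := (par hconn).

Lemma edge_tree v w : e v w ->
  (v != r /\ w = par v) \/ (w != r /\ v = par w).
Proof.
move=> hvw.
pose P := [set p : T * T | e p.1 p.2].
pose Q1 := [set (x, par x) | x in [set~ r]].
pose Q2 := [set (par x, x) | x in [set~ r]].
have cQ1 : #|Q1| = #|T| - 1.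
  by rewrite card_in_imset ?cardsC1 ?subn1 // => x y _ _ [].
have cQ2 : #|Q2| = #|T| - 1.
  by rewrite card_in_imset ?cardsC1 ?subn1 // => x y _ _ [].
have dQ : Q1 :&: Q2 = set0.
  apply/setP => -[a b]; rewrite !inE; apply/negP => /andP[].
  case/imsetP => x; rewrite !inE => hx [-> ->].
  case/imsetP => y; rewrite !inE => hy [h1 h2].
  have [_ e1 p1] := par_spec hconn hx; have [_ e2 p2] := par_spec hconn hy.
  rewrite h2 in e1; rewrite -h1 in e2; lia.
have sQ : Q1 :|: Q2 \subset P.
  apply/subsetP => -[a b]; rewrite !inE; case/orP.
    case/imsetP => x; rewrite !inE => hx [-> ->] /=.
    by have [h _ _] := par_spec hconn hx; rewrite esym.
  case/imsetP => x; rewrite !inE => hx [-> ->] /=.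
  by have [h _ _] := par_spec hconn hx.
have sym : forall a b, ((a, b) \in Q1 :|: Q2) = ((b, a) \in Q1 :|: Q2).
  suff H : forall a b, (a, b) \in Q1 :|: Q2 -> (b, a) \in Q1 :|: Q2.
    by move=> a b; apply/idP/idP; apply: H.
  move=> a b; rewrite !inE; case/orP => /imsetP [x hx [-> ->]]; apply/orP.
    by right; apply/imsetP; exists x.
  by left; apply/imsetP; exists x.
case: (boolP ((v, w) \in Q1 :|: Q2)) => hin.
  rewrite inE in hin; case/orP: hin => /imsetP [x]; rewrite !inE => hx [-> ->].
    by left.
  by right.
exfalso.
have hin' : (w, v) \notin Q1 :|: Q2 by rewrite -sym.
have nvw : (v, w) != (w, v).
  apply/eqP => -[h]; by rewrite h eirr in hvw.
have sub2 : (Q1 :|: Q2) :|: [set (v, w); (w, v)] \subset P.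
  rewrite subUset sQ /=; apply/subsetP => p; rewrite !inE.
  by case/orP => /eqP -> /=; rewrite // esym.
have := subset_leq_card sub2.
rewrite cardsU cardsU dQ cards0 cQ1 cQ2 cards2 nvw.
have -> : (Q1 :|: Q2) :&: [set (v, w); (w, v)] = set0.
  apply/setP => p; rewrite !inE; apply/negP => /andP[h] /orP[] /eqP hp.
    by move: hin; rewrite -hp inE h.
  by move: hin'; rewrite -hp inE h.
rewrite cards0.
have : n_edges e = #|T| - 1 by [].
rewrite /n_edges -/P.
have : 0 < #|T| by apply/card_gt0P; exists v.
lia.
Qed.

End TreeS.


Section Deg.
Variables (T : finType) (e : rel T).

Lemma deg_ge2 v a b : e v a -> e v b -> a != b -> 1 < deg e v.
Proof. by move=> ha hb hab; apply/card_gt1P; exists a, b; rewrite !inE ha hb. Qed.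

Lemma other_nbr v a : 1 < deg e v -> exists b, e v b && (b != a).
Proof.
case/card_gt1P => x [y [hx hy hxy]]; rewrite !inE in hx hy.
case: (eqVneq x a) => [hxa|hxa]; last by exists x; rewrite hx.
by exists y; rewrite hy; rewrite -hxa eq_sym.
Qed.

Lemma leaf_nbr v : v \in leaves e -> exists u, [set w | e v w] = [set u].
Proof. by rewrite inE => /cards1P. Qed.

Lemma nbr_gt0 v u : e v u -> 0 < deg e v.
Proof. by move=> h; apply/card_gt0P; exists u; rewrite inE. Qed.

End Deg.

Section TreeD.
Variables (T : finType) (e : rel T) (r : T).
Hypotheses (esym : symmetric e) (eirr : irreflexive e) (hconn : forall x, connect e r x)
  (hedges : n_edges e = #|T| - 1).

Notation d := (depth hconn).
Notation par := (par hconn).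

Lemma child v w : v != r -> e v w -> w != par v -> d w = (d v).+1.
Proof.
move=> hv hvw hw; case: (@edge_tree T e r esym eirr hconn hedges v w hvw) => [[_ h]|[hwr h]].
  by rewrite h eqxx in hw.
have [_ h1 h2] := par_spec hconn hwr; rewrite -h in h1; lia.
Qed.

Lemma edge_le x y : e x y -> d x <= (d y).+1.
Proof. by move=> h; apply: depth_edge; rewrite esym. Qed.

Hypothesis rl : r \in leaves e.

Definition DD (i : nat) := [set x | (x \in supports e) || ((x \notin leaves e) && (d x %% 4 == i))].

Lemma DD_dom i : i < 4 -> disj_dom e (DD i).
Proof.
move=> hi; apply/forallP => v; apply/implyP => hv.
rewrite inE negb_or negb_and negbK in hv; case/andP: hv => hvS hv2.
case hL: (v \in leaves e).
  have [u hu] := leaf_nbr hL.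
  have hvu : e v u by have := set11 u; rewrite -hu inE.
  apply/orP; left; apply/existsP; exists u; rewrite hvu andbT !inE.
  by apply/orP; left; apply/existsP; exists v; rewrite esym hvu hL.
rewrite hL /= in hv2.
have hvr : v != r by apply/eqP => h; rewrite h rl in hL.
have [hpv hdp hdv] := par_spec hconn hvr.
set p := par v in hpv hdp.
have hvp : e v p by rewrite esym.
have supp : forall x y, e x y -> y \in leaves e -> x \in supports e.
  by move=> x y hxy hy; rewrite inE; apply/existsP; exists y; rewrite hxy hy.
have hdv2 : 2 <= d v.
  case: (ltnP 1 (d v)) => // h1.
  have hp0 : d p = 0 by rewrite hdp; lia.
  have := depth0 hp0 => hpr.
  have hpL : p \in leaves e by rewrite hpr.
  by move: hvS; rewrite (supp v p hvp hpL).
have hpr : p != r by apply/eqP => h; move: hdp; rewrite h depth_r; lia.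
have hdegv : 1 < deg e v.
  have := nbr_gt0 hvp.
  by move: hL; rewrite inE => /negbT; lia.
have [c /andP[hvc hcp]] := other_nbr p hdegv.
have hdc := child hvr hvc hcp.
have hcL : c \notin leaves e by apply/negP => h; move: hvS; rewrite (supp v c).
have hcr : c != r by apply/eqP => h; move: hdc; rewrite h depth_r.
have [hpc hdpc _] := par_spec hconn hcr.
have hdegc : 1 < deg e c.
  have hcpc : e c (par c) by rewrite esym.
  have := nbr_gt0 hcpc.
  by move: hcL; rewrite inE; lia.
have [gc /andP[hcgc hgcp]] := other_nbr (par c) hdegc.
have hdgc := child hcr hcgc hgcp.
have [hgp hdg _] := par_spec hconn hpr.
set g := par p in hgp hdg.
have inD : forall x, x \in supports e -> x \in DD i by move=> x hx; rewrite inE hx.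
have inD2 : forall x, x \notin leaves e -> d x %% 4 == i -> x \in DD i.
  by move=> x h1 h2; rewrite inE h1 h2 orbT.
have : (d p %% 4 == i) || (d c %% 4 == i) || ((d g %% 4 == i) && (d gc %% 4 == i)).
  rewrite hdg hdp hdgc hdc. move: hv2 hdv2 hi. clear. move: (d v) => k. lia.
case/orP => [/orP[]|/andP[hg hgc]].
- move=> hp; apply/orP; left; apply/existsP; exists p; rewrite hvp andbT.
  apply: inD2 hp; rewrite inE.
  have hgv : g != v.
    apply/eqP => h; move: hdg hdv2; rewrite h hdp; clear; move: (d v) => k; lia.
  have hpg : e p g by rewrite esym.
  have := deg_ge2 hpg hpv hgv; clear; move: (deg e p) => k; lia.
- by move=> hc; apply/orP; left; apply/existsP; exists c; rewrite hvc andbT; apply: inD2.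
case hgL: (g \in leaves e).
  apply/orP; left; apply/existsP; exists p; rewrite esym hpv andbT; apply: inD.
  by apply: supp hgL; rewrite esym.
case hgcL: (gc \in leaves e).
  by apply/orP; left; apply/existsP; exists c; rewrite hvc andbT; apply: inD; apply: supp hgcL.
have hgD : g \in DD i by apply: inD2; rewrite ?hgL.
have hgcD : gc \in DD i by apply: inD2; rewrite ?hgcL.
rewrite !inE in hgD hgcD.
apply/orP; right; apply/card_gt1P; exists g, gc; rewrite !inE hgD hgcD /=; split.
- apply/and3P; split.
  + apply/eqP => h; move: hdg hdp hdv2; rewrite -h; clear; move: (d v) (d p) => k l; lia.
  + apply/negP => /edge_le; move: hdg hdp hdv2; clear; move: (d v) (d p) (d g) => k l m; lia.
  + by apply/existsP; exists p; rewrite hvp esym hgp.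
- apply/and3P; split.
  + apply/eqP => h; move: hdgc hdc; rewrite -h; clear; move: (d v) (d c) => k l; lia.
  + apply/negP => /(depth_edge hconn); move: hdgc hdc; clear; move: (d v) (d c) (d gc) => k l m; lia.
  + by apply/existsP; exists c; rewrite hvc hcgc.
- apply/eqP => h; move: hdg hdgc hdc hdp hdv2; rewrite h; clear; move: (d v) (d p) (d c) (d gc) => a b c' f; lia.
Qed.

End TreeD.


Lemma gamma_le (T : finType) (e : rel T) (D : {set T}) : disj_dom e D -> gamma_d2 e <= #|D|.
Proof.
move=> hD; rewrite /gamma_d2.
have : D \in index_enum {set T} by rewrite mem_index_enum.
elim: (index_enum _) => //= a s IH; rewrite inE big_cons; case/orP => [/eqP <-|/IH h].
  by rewrite hD geq_minl.
by case: (disj_dom e a) => //; rewrite geq_min h orbT.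
Qed.

Lemma sum_part4 (T : finType) (A : {set T}) (f : T -> nat) (H : forall x, f x < 4) :
  #|A| = \sum_(i < 4) #|[set x in A | f x == i]|.
Proof.
rewrite -sum1_card (partition_big (fun x => Ordinal (H x)) predT) //=.
apply: eq_bigr => j _; rewrite sum1dep_card; apply: eq_card => x; rewrite !inE.
by [].
Qed.

Section Main.
Variables (T : finType) (e : rel T).
Hypotheses (esym : symmetric e) (eirr : irreflexive e) (hc : forall x y, connect e x y)
  (hedges : n_edges e = #|T| - 1).

Lemma leaf_exists : 2 <= #|T| -> exists l, l \in leaves e.
Proof.
move=> h2.
have [r0 [y hy]] : exists r0 y : T, y != r0.
  by move/card_gt1P: h2 => [a [b [ha hb hab]]]; exists b, a.
pose h0 := fun x => hc r0 x.
pose x := [arg max_(x > r0) depth h0 x].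
have hxmax : forall z, depth h0 z <= depth h0 x.
  by rewrite /x; case: arg_maxnP => // z _ H w; apply: H.
have hdy : 0 < depth h0 y by rewrite lt0n; apply/eqP => /depth0 hh; rewrite hh eqxx in hy.
have hxr : x != r0.
  apply/eqP => hh; have := hxmax y; rewrite hh (depth_r h0); lia.
exists x; rewrite inE; apply/cards1P; exists (par h0 x).
have [hp _ _] := par_spec h0 hxr.
apply/setP => w; rewrite !inE; apply/idP/idP.
  move=> hxw; apply/negPn/negP => hw.
  have := child esym eirr hedges hxr hxw hw; have := hxmax w; lia.
by move/eqP ->; rewrite esym.
Qed.

Lemma p2_case a : a \in leaves e -> a \in supports e -> 2 <= #|T| ->
  4 * gamma_d2 e + #|leaves e| <= #|T| + 3 * #|supports e|.
Proof.
move=> haL haS h2.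
have [b /andP[hab hbL]] : exists b, e a b && (b \in leaves e) by move: haS; rewrite inE => /existsP.
have nbr1 : forall u v w, u \in leaves e -> e u v -> e u w -> w = v.
  move=> u v w /leaf_nbr [z hz] huv huw.
  have : v \in [set z] by rewrite -hz inE.
  have : w \in [set z] by rewrite -hz inE.
  by rewrite !inE => /eqP -> /eqP ->.
pose h := fun x => hc a x.
have hba : e b a by rewrite esym.
have no2 : forall y, depth h y != 2.
  move=> y; apply/eqP => hy.
  have hya : y != a by apply/eqP => hh; move: hy; rewrite hh depth_r.
  have [hp1 hp2 _] := par_spec h hya.
  have hpa : par h y != a by apply/eqP => hh; move: hp2; rewrite hh depth_r hy.
  have [hq1 hq2 _] := par_spec h hpa.
  have hq0 : par h (par h y) = a by apply: (@depth0 _ _ _ h); rewrite hq2 hp2 hy.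
  rewrite hq0 in hq1.
  have hpb : par h y = b by apply: (nbr1 a) .
  rewrite hpb in hp1.
  have hya' : y = a by apply: (nbr1 b).
  by rewrite hya' eqxx in hya.
have ge2 : forall k y, depth h y = k.+2 -> exists z, depth h z = 2.
  elim=> [|k IH] y hy; first by exists y.
  have hya : y != a by apply/eqP => hh; move: hy; rewrite hh depth_r.
  have [_ hp2 _] := par_spec h hya.
  by apply: (IH (par h y)); rewrite hp2 hy.
have allab : forall z, (z == a) || (z == b).
  move=> z; case hz: (depth h z) => [|[|k]].
  - by rewrite (depth0 (hconn:=h) hz) eqxx.
  - have hza : z != a by apply/eqP => hh; move: hz; rewrite hh depth_r.
    have [hp1 hp2 _] := par_spec h hza.
    have hp0 : par h z = a by apply: (@depth0 _ _ _ h); rewrite hp2 hz.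
    rewrite hp0 in hp1; by rewrite (nbr1 a b z haL hab hp1) eqxx orbT.
  - have [y hy] := ge2 k z hz; by move: (no2 y); rewrite hy.
have hab' : a != b by apply/eqP => hh; move: hab; rewrite hh eirr.
have hn : #|T| <= 2.
  have hs : [set: T] \subset [set a; b].
    by apply/subsetP => z _; rewrite !inE; exact: allab.
  by have := subset_leq_card hs; rewrite cardsT cards2 hab'.
have hg : gamma_d2 e <= 1.
  rewrite -(cards1 b); apply: gamma_le; apply/forallP => v; apply/implyP; rewrite inE => hvb.
  apply/orP; left; apply/existsP; exists b; rewrite inE eqxx /=.
  by move: (allab v); rewrite (negbTE hvb) orbF => /eqP ->.
have hs : 2 <= #|supports e|.
  have hs : [set a; b] \subset supports e.
    apply/subsetP => z; rewrite !inE => /orP[] /eqP ->; first by rewrite inE in haS.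
    by apply/existsP; exists a; rewrite hba haL.
  by have := subset_leq_card hs; rewrite cards2 hab'.
have hl : #|leaves e| <= #|T| by apply: max_card.
lia.
Qed.

Lemma main_bound : 2 <= #|T| ->
  4 * gamma_d2 e + #|leaves e| <= #|T| + 3 * #|supports e|.
Proof.
move=> h2.
case: (pickP [pred x | (x \in leaves e) && (x \in supports e)]) => [a /andP[h1 h3]|hdisj].
  exact: p2_case h1 h3 h2.
have [l hl] := leaf_exists h2.
pose h := fun x => hc l x.
pose Y i := [set x | (x \notin leaves e) && (x \notin supports e) && (depth h x %% 4 == i)].
have hD : forall i, i < 4 -> gamma_d2 e <= #|supports e| + #|Y i|.
  move=> i hi; apply: leq_trans (gamma_le (DD_dom esym eirr h hedges hl hi)) _.
  have sub : DD h i \subset supports e :|: Y i.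
    apply/subsetP => x; rewrite /DD /Y.
    move: (supports e) (leaves e) => S L; rewrite !inE.
    by case: (x \in S); case: (x \in L).
  by have := subset_leq_card sub; rewrite cardsU; lia.
have hsum := sum_part4 (~: (leaves e :|: supports e)) (fun x => ltn_pmod (depth h x) (isT : 0 < 4)).
rewrite !big_ord_recr big_ord0 /= in hsum.
have eY : forall i, #|[set x in ~: (leaves e :|: supports e) | depth h x %% 4 == i]| = #|Y i|.
  by move=> i; apply: eq_card => x; rewrite !inE negb_or.
rewrite !eY in hsum.
have hC := cardsC (leaves e :|: supports e).
have hI : leaves e :&: supports e = set0.
  by apply/setP => x; rewrite !inE; have := hdisj x; rewrite /= !inE.
rewrite cardsU hI cards0 in hC.
have := hD 0 isT; have := hD 1 isT; have := hD 2 isT; have := hD 3 isT.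
move: hsum hC; clear.
move: (gamma_d2 e) #|leaves e| #|supports e| #|T| (#|Y 0|) (#|Y 1|) (#|Y 2|) (#|Y 3|) #|~: (leaves e :|: supports e)|.
move=> *; lia.
Qed.

End Main.

Unset Implicit Arguments.

Theorem corollary2p5 (T : finType) (e : rel T) :
  is_tree e -> 2 <= #|T| ->
  4 * gamma_d2 e + #|leaves e| <= #|T| + 3 * #|supports e|.
Proof.
move=> [[esym eirr] [hc hedges]] h2.
exact: main_bound.
Qed.
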